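(* If $p:X\to Y$ is a covering map with finite fibers and $X$ is paracompact (Hausdorff), then $p$ is an overlay.
   Context: A covering map $p:X\to Y$ is a continuous surjection such that every point of $Y$ has an open neighborhood $V$ with $p^{-1}(V)$ a disjoint union of open sets each mapped homeomorphically onto $V$. For a continuous map $p:X\to Y$: a slice of $p$ is an open set $U\subseteq X$ such that $p^{-1}(p(U))$ is the disjoint union of a family of open sets $U_s$ ($s\in S$), each mapped by $p$ homeomorphically onto $p(U)$, with $U=U_t$ for some $t\in S$. A covering structure of $p$ is an open cover $\mathcal S$ of $X$ by slices of $p$ such that for every $U\in\mathcal S$, $p^{-1}(p(U))$ is the disjoint union of a family $\{U_j\}_{j\in J}$ of elements of $\mathcal S$, each mapped homeomorphically onto $p(U)$. For a cover $\mathcal S$ and $x\in X$, $st(x,\mathcal S)=\bigcup\{U\in\mathcal S: x\in U\}$. An overlay structure of $p$ is a covering structure $\mathcal S$ such that $st(x,\mathcal S)$ is a slice of $p$ for every $x\in X$. The map $p$ is an overlay if it has an overlay structure. *)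

(* Defs.v *)
From Stdlib Require Import List.

Record TopSpace := {
  carrier :> Type;
  is_open : (carrier -> Prop) -> Prop;
  open_full : is_open (fun _ => True);
  open_inter : forall U V, is_open U -> is_open V -> is_open (fun x => U x /\ V x);
  open_union : forall F : (carrier -> Prop) -> Prop,
      (forall U, F U -> is_open U) -> is_open (fun x => exists U, F U /\ U x)
}.

Arguments is_open {t} _.

Section Topo.
Context {X Y : TopSpace}.

Definition set_eq (A B : X -> Prop) : Prop := forall x, A x <-> B x.

Definition open_in {Z : TopSpace} (A S : Z -> Prop) : Prop :=
  exists O : Z -> Prop, is_open O /\ forall z, S z <-> (A z /\ O z).

Definition image (p : X -> Y) (A : X -> Prop) : Y -> Prop :=
  fun y => exists x, A x /\ p x = y.

Definition continuous (p : X -> Y) : Prop :=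
  forall V : Y -> Prop, is_open V -> is_open (fun x => V (p x)).

Definition homeo_onto (p : X -> Y) (U : X -> Prop) (V : Y -> Prop) : Prop :=
  (forall x, U x -> V (p x)) /\
  (forall x x', U x -> U x' -> p x = p x' -> x = x') /\
  (forall y, V y -> exists x, U x /\ p x = y) /\
  (forall W : Y -> Prop, open_in V W -> open_in U (fun x => U x /\ W (p x))) /\
  (forall W : X -> Prop, open_in U W -> open_in V (image p W)).

Definition disjoint_sheets (p : X -> Y) (A : X -> Prop) (V : Y -> Prop)
    (S : Type) (Us : S -> X -> Prop) : Prop :=
  (forall s, is_open (Us s)) /\
  (forall s t x, Us s x -> Us t x -> s = t) /\
  (forall x, A x <-> exists s, Us s x) /\
  (forall s, homeo_onto p (Us s) V).

Definition covering_map (p : X -> Y) : Prop :=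
  continuous p /\
  (forall y : Y, exists x, p x = y) /\
  (forall y : Y, exists V : Y -> Prop, is_open V /\ V y /\
     exists (S : Type) (Us : S -> X -> Prop),
       disjoint_sheets p (fun x => V (p x)) V S Us).

Definition slice (p : X -> Y) (U : X -> Prop) : Prop :=
  is_open U /\
  exists (S : Type) (Us : S -> X -> Prop) (t : S),
    disjoint_sheets p (fun x => image p U (p x)) (image p U) S Us /\
    set_eq U (Us t).

Definition covering_structure (p : X -> Y) (C : (X -> Prop) -> Prop) : Prop :=
  (forall U, C U -> slice p U) /\
  (forall x : X, exists U, C U /\ U x) /\
  (forall U, C U ->
     exists (J : Type) (Us : J -> X -> Prop),
       (forall j, C (Us j)) /\
       disjoint_sheets p (fun x => image p U (p x)) (image p U) J Us).

Definition star (C : (X -> Prop) -> Prop) (x : X) : X -> Prop :=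
  fun z => exists U, C U /\ U x /\ U z.

Definition overlay_structure (p : X -> Y) (C : (X -> Prop) -> Prop) : Prop :=
  covering_structure p C /\ forall x : X, slice p (star C x).

Definition overlay (p : X -> Y) : Prop :=
  exists C, overlay_structure p C.

Definition finite_fibers (p : X -> Y) : Prop :=
  forall y : Y, exists l : list X, forall x, p x = y -> In x l.

End Topo.

Definition hausdorff (X : TopSpace) : Prop :=
  forall x y : X, x <> y ->
    exists U V : X -> Prop, is_open U /\ is_open V /\ U x /\ V y /\
      forall z, ~ (U z /\ V z).

Definition paracompact (X : TopSpace) : Prop :=
  forall (I : Type) (Us : I -> X -> Prop),
    (forall i, is_open (Us i)) -> (forall x, exists i, Us i x) ->
    exists (J : Type) (Vs : J -> X -> Prop),
      (forall j, is_open (Vs j)) /\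
      (forall x, exists j, Vs j x) /\
      (forall j, exists i, forall x, Vs j x -> Us i x) /\
      (forall x : X, exists W : X -> Prop, is_open W /\ W x /\
         exists l : list J, forall j, (exists z, W z /\ Vs j z) -> In j l).

(* Main.v *)
Require Import Defs.
From Stdlib Require Import List Classical FunctionalExtensionality PropExtensionality IndefiniteDescription ProofIrrelevance.

Lemma set_ext {T : Type} (A B : T -> Prop) : (forall x, A x <-> B x) -> A = B.
Proof. intro H; apply functional_extensionality; intro x; apply propositional_extensionality; auto. Qed.

Lemma open_ext {X : TopSpace} (A B : X -> Prop) : is_open A -> (forall x, A x <-> B x) -> is_open B.
Proof. intros HA H; rewrite <- (set_ext A B H); exact HA. Qed.

Lemma open_union' {X : TopSpace} (B : X -> Prop) :
  (forall x, B x -> exists O, is_open O /\ O x /\ forall z, O z -> B z) -> is_open B.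
Proof.
  intro H. apply open_ext with (fun x => exists U, (is_open U /\ forall z, U z -> B z) /\ U x).
  - apply open_union. intros U [HU _]; exact HU.
  - intro x; split.
    + intros [U [[_ HU] Ux]]; auto.
    + intro Bx; destruct (H x Bx) as [O [HO [Ox HOB]]]; exists O; auto.
Qed.

Lemma open_list_inter {X : TopSpace} {A : Type} (l : list A) (Q : A -> Prop) (F : A -> X -> Prop) :
  (forall a, In a l -> Q a -> is_open (F a)) -> is_open (fun x => forall a, In a l -> Q a -> F a x).
Proof.
  induction l as [|a l IH]; intro H.
  - apply open_ext with (fun _ => True). apply open_full. intro x; split; [intros _ b []| auto].
  - destruct (classic (Q a)) as [qa|nqa].
    + apply open_ext with (fun x => F a x /\ forall b, In b l -> Q b -> F b x).
      * apply open_inter; [apply H; simpl; auto | apply IH; intros; apply H; simpl; auto].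
      * intro x; split.
        -- intros [h1 h2] b [<-|hb] qb; auto.
        -- intros h; split; [apply h; simpl; auto| intros; apply h; simpl; auto].
    + apply open_ext with (fun x => forall b, In b l -> Q b -> F b x).
      * apply IH; intros; apply H; simpl; auto.
      * intro x; split.
        -- intros h b [<-|hb] qb; [contradiction|auto].
        -- intros h b hb qb; apply h; simpl; auto.
Qed.

Lemma nbhd_list {X : TopSpace} {A : Type} (x : X) (l : list A) (P : A -> (X -> Prop) -> Prop) :
  (forall a (O O' : X -> Prop), (forall z, O' z -> O z) -> P a O -> P a O') ->
  (forall a, In a l -> exists O, is_open O /\ O x /\ P a O) ->
  exists O, is_open O /\ O x /\ forall a, In a l -> P a O.
Proof.
  intros Hm. induction l as [|a l IH]; intro H.
  - exists (fun _ => True). split; [apply open_full|split; [auto| intros a []]].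
  - destruct (H a (or_introl eq_refl)) as [O1 [H1 [O1x P1]]].
    destruct IH as [O2 [H2 [O2x P2]]]. { intros; apply H; simpl; auto. }
    exists (fun z => O1 z /\ O2 z). split; [apply open_inter; auto|split; [auto|]].
    intros b [Hb|hb].
    + rewrite <- Hb. apply (Hm a O1); [intros z []; auto| auto].
    + apply (Hm b O2); [intros z []; auto| auto].
Qed.

Lemma choice' {A B : Type} (R : A -> B -> Prop) : (forall a, exists b, R a b) -> exists f, forall a, R a (f a).
Proof.
  intro H. exists (fun a => proj1_sig (constructive_indefinite_description _ (H a))).
  intro a; exact (proj2_sig (constructive_indefinite_description _ (H a))).
Qed.

Lemma cov_open_image {X Y : TopSpace} (p : X -> Y) : covering_map p -> forall W, is_open W -> is_open (image p W).
Proof.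
  intros [Hc [Hs Hl]] W HW. apply open_union'. intros y [w [Ww <-]].
  destruct (Hl (p w)) as [V [HV [Vy [S [Us [Hop [Hdis [Hcov Hh]]]]]]]].
  destruct (proj1 (Hcov w) Vy) as [s Hs0].
  destruct (Hh s) as [_ [_ [_ [_ H5]]]].
  assert (Ho : open_in (Us s) (fun x => W x /\ Us s x)).
  { exists W; split; [auto| intro; tauto]. }
  destruct (H5 _ Ho) as [O [HO HOe]].
  exists (fun y => V y /\ O y). split; [apply open_inter; auto|split].
  - apply HOe. exists w; auto.
  - intros z Hz. apply HOe in Hz. destruct Hz as [x [[Wx _] <-]]. exists x; auto.
Qed.

Lemma homeo_of {X Y : TopSpace} (p : X -> Y) (U : X -> Prop) (V : Y -> Prop) :
  continuous p -> (forall W, is_open W -> is_open (image p W)) -> is_open U ->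
  (forall x, U x -> V (p x)) -> (forall x x', U x -> U x' -> p x = p x' -> x = x') ->
  (forall y, V y -> exists x, U x /\ p x = y) -> homeo_onto p U V.
Proof.
  intros Hc Hpo HU Hm Hi Hs. split; [auto|split; [auto|split; [auto|split]]].
  - intros W [O [HO HW]]. exists (fun x => O (p x)). split; [apply Hc; auto|].
    intro x; split.
    + intros [Ux Wx]. split; [auto| apply HW; auto].
    + intros [Ux Ox]. split; [auto| apply HW; auto].
  - intros W [O [HO HW]].
    assert (HWo : is_open W).
    { apply open_ext with (fun x => U x /\ O x); [apply open_inter; auto| intro x; split; intro; apply HW; auto]. }
    exists (image p W). split; [apply Hpo; auto|].
    intro y; split; [|tauto]. intros [x [Wx <-]]. split; [apply Hm; apply HW; auto| exists x; auto].
Qed.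

Definition triv {X Y : TopSpace} (p : X -> Y) (V : Y -> Prop) (E : X -> X -> Prop) : Prop :=
  is_open V /\
  (forall x, V (p x) -> is_open (E x) /\ E x x) /\
  (forall x z, V (p x) -> E x z -> V (p z)) /\
  (forall x z w, V (p x) -> E x z -> E x w -> p z = p w -> z = w) /\
  (forall x y, V (p x) -> V y -> exists z, E x z /\ p z = y) /\
  (forall x z, V (p x) -> E x z -> forall w, E z w <-> E x w).

Lemma triv_of_sheets {X Y : TopSpace} (p : X -> Y) (V : Y -> Prop) (S : Type) (Us : S -> X -> Prop) :
  is_open V -> disjoint_sheets p (fun x => V (p x)) V S Us ->
  triv p V (fun x z => exists s, Us s x /\ Us s z).
Proof.
  intros HV [Hop [Hdis [Hcov Hh]]].
  split; [auto|split; [|split; [|split; [|split]]]].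
  - intros x Vx. destruct (proj1 (Hcov x) Vx) as [s Hs]. split.
    + apply open_ext with (Us s); [auto|]. intro z; split.
      * intro; exists s; auto.
      * intros [t [Ht1 Ht2]]. rewrite (Hdis s t x Hs Ht1); auto.
    + exists s; auto.
  - intros x z _ [s [_ Hs]]. destruct (Hh s) as [Hm _]. apply Hm; auto.
  - intros x z w _ [s [Hs1 Hs2]] [t [Ht1 Ht2]] Hp.
    rewrite (Hdis s t x Hs1 Ht1) in Hs2. destruct (Hh t) as [_ [Hi _]]. apply Hi; auto.
  - intros x y Vx Vy. destruct (proj1 (Hcov x) Vx) as [s Hs].
    destruct (Hh s) as [_ [_ [Ho _]]]. destruct (Ho y Vy) as [z [Hz1 Hz2]]. exists z; split; [exists s|]; auto.
  - intros x z _ [s [Hs1 Hs2]] w; split.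
    + intros [t [Ht1 Ht2]]. rewrite <- (Hdis s t z Hs2 Ht1) in Ht2. exists s; auto.
    + intros [t [Ht1 Ht2]]. rewrite <- (Hdis s t x Hs1 Ht1) in Ht2. exists s; auto.
Qed.

Lemma cov_triv {X Y : TopSpace} (p : X -> Y) : covering_map p ->
  exists (V : Y -> Y -> Prop) (E : Y -> X -> X -> Prop), forall y, triv p (V y) (E y) /\ V y y.
Proof.
  intros [_ [_ Hl]].
  assert (H : forall y, exists VE : (Y -> Prop) * (X -> X -> Prop), triv p (fst VE) (snd VE) /\ fst VE y).
  { intro y. destruct (Hl y) as [V [HV [Vy [S [Us Hd]]]]].
    exists (V, fun x z => exists s, Us s x /\ Us s z). simpl. split; [apply (triv_of_sheets p V S Us); auto|auto]. }
  destruct (choice' _ H) as [f Hf].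
  exists (fun y => fst (f y)), (fun y => snd (f y)). exact Hf.
Qed.

Definition cl {X : TopSpace} (B : X -> Prop) (z : X) : Prop :=
  forall O, is_open O -> O z -> exists w, O w /\ B w.

Lemma reg {X : TopSpace} : paracompact X -> hausdorff X ->
  forall (x : X) (A : X -> Prop), is_open A -> A x -> exists G, is_open G /\ G x /\ forall z, cl G z -> A z.
Proof.
  intros Hpc Hh x A HA Ax.
  assert (Hsep: forall z, exists UO : (X->Prop)*(X->Prop), A z \/ (is_open (fst UO) /\ is_open (snd UO) /\
     fst UO z /\ snd UO x /\ forall v, ~(fst UO v /\ snd UO v))).
  { intro z. destruct (classic (A z)) as [Az|nAz].
    - exists (A, A); auto.
    - assert (Hzx : z <> x) by (intro; subst; contradiction).
      destruct (Hh z x Hzx) as [U [O [HU [HO [Uz [Ox Hd]]]]]]. exists (U, O); right; simpl; auto. }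
  destruct (choice' _ Hsep) as [f Hf].
  pose (Us := fun z w => (A z /\ A w) \/ (~ A z /\ fst (f z) w)).
  destruct (Hpc X Us) as [J [Vs [HVo [HVc [HVr HVl]]]]].
  - intro z. destruct (classic (A z)) as [Az|nAz].
    + apply open_ext with A; auto. intro w; unfold Us; tauto.
    + destruct (Hf z) as [|[HU _]]; [contradiction|]. apply open_ext with (fst (f z)); auto. intro w; unfold Us; tauto.
  - intro w. exists w. unfold Us. destruct (classic (A w)); [left; auto| right; split; auto].
    destruct (Hf w) as [|[_ [_ [Uz _]]]]; [contradiction|auto].
  - destruct (HVl x) as [W [HW [Wx [l Hl]]]].
    destruct (nbhd_list x l (fun j O => (forall w, Vs j w -> A w) \/ (forall v, ~ (O v /\ Vs j v)))) as [O [HO [Ox HOl]]].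
    + intros j O O' Hsub [H|H]; [left; auto| right; intros v [h1 h2]; apply (H v); auto].
    + intros j _. destruct (HVr j) as [i Hi]. destruct (classic (A i)) as [Ai|nAi].
      * exists (fun _ => True). split; [apply open_full|split; [auto|left]]. intros w Vw.
        destruct (Hi w Vw) as [[_ Aw]|[nA _]]; [auto|contradiction].
      * destruct (Hf i) as [|[_ [HO [_ [Ox Hd]]]]]; [contradiction|].
        exists (snd (f i)). split; [auto|split; [auto|right]]. intros v [h1 h2].
        destruct (Hi v h2) as [[Ai _]|[_ Hv]]; [contradiction|]. apply (Hd v); auto.
    + exists (fun z => W z /\ O z). split; [apply open_inter; auto|split; [auto|]].
      intros z Hcl. apply NNPP; intro nAz. destruct (HVc z) as [j Vj].
      destruct (Hcl (Vs j) (HVo j) Vj) as [v [Vv [Wv Ov]]].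
      assert (Hj : In j l) by (apply Hl; exists v; auto).
      destruct (HOl j Hj) as [H|H]; [apply nAz; apply H; auto| apply (H v); auto].
Qed.

Lemma refine_cl {X Y : TopSpace} (p : X -> Y) (V : Y -> Y -> Prop) :
  continuous p -> paracompact X -> hausdorff X -> (forall y, is_open (V y) /\ V y y) ->
  exists (K : Type) (B : K -> X -> Prop) (c : K -> Y),
   (forall k, is_open (B k)) /\ (forall x, exists k, B k x) /\ (forall k z, cl (B k) z -> V (c k) (p z)) /\
   (forall x : X, exists W : X -> Prop, is_open W /\ W x /\ exists l : list K, forall k, (exists z, W z /\ B k z) -> In k l).
Proof.
  intros Hc Hpc Hh HV.
  assert (H1: forall x, exists G, is_open G /\ G x /\ forall z, cl G z -> V (p x) (p z)).
  { intro x. apply (reg Hpc Hh x (fun z => V (p x) (p z))). apply Hc, HV. apply HV. }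
  destruct (choice' _ H1) as [Gf HGf].
  destruct (Hpc X Gf) as [J [Vs [HVo [HVc [HVr HVl]]]]].
  - intro x; apply HGf.
  - intro x; exists x; apply HGf.
  - destruct (choice' _ HVr) as [r Hr].
    exists J, Vs, (fun j => p (r j)). split; [auto|split; [auto|split; [|auto]]].
    intros k z Hcl. apply (HGf (r k)). intros O HO Oz. destruct (Hcl O HO Oz) as [w [Ow Vw]].
    exists w; split; [auto| apply Hr; auto].
Qed.

Definition Wset {X Y : TopSpace} (p : X -> Y) (G : X -> X -> Prop) (y y' : Y) : Prop :=
  forall x, p x = y -> image p (G x) y'.
Definition Sig {X Y : TopSpace} (p : X -> Y) (E : Y -> X -> X -> Prop) (G : X -> X -> Prop) (y : Y) (xi z : X) : Prop :=
  E y xi z /\ Wset p G y (p z).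
Definition St {X Y : TopSpace} (p : X -> Y) (E : Y -> X -> X -> Prop) (G : X -> X -> Prop) (x z : X) : Prop :=
  exists y, Wset p G y (p x) /\ Sig p E G y x z.
Definition CC {X Y : TopSpace} (p : X -> Y) (E : Y -> X -> X -> Prop) (G : X -> X -> Prop) (U : X -> Prop) : Prop :=
  exists y xi, Wset p G y (p xi) /\ U = Sig p E G y xi.

Lemma core {X Y : TopSpace} (p : X -> Y) (V : Y -> Y -> Prop) (E : Y -> X -> X -> Prop)
  (K : Type) (B : K -> X -> Prop) (c : K -> Y) (N : X -> X -> Prop) (L : X -> list K) (G : X -> X -> Prop) :
  continuous p -> (forall W, is_open W -> is_open (image p W)) -> (forall y, exists x, p x = y) -> finite_fibers p ->
  (forall y, triv p (V y) (E y) /\ V y y) ->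
  (forall k, is_open (B k)) -> (forall x, exists k, B k x) ->
  (forall k z, cl (B k) z -> V (c k) (p z)) ->
  (forall x, is_open (N x) /\ N x x /\ forall k, (exists z, N x z /\ B k z) -> In k (L x)) ->
  (forall x, is_open (G x) /\ G x x /\ (forall z, G x z -> E (p x) x z) /\ (forall z, G x z -> N x z) /\
    forall k, In k (L x) -> (cl (B k) x -> forall z, G x z -> E (c k) x z) /\ (~ cl (B k) x -> forall z, G x z -> ~ B k z)) ->
  overlay p.
Proof.
  intros Hc Hpo Hsurj Hfin hT HBo HBc Hcl HN HG.
  assert (TVo : forall y, is_open (V y)) by (intro y; destruct (hT y) as [[T _] _]; exact T).
  assert (TVy : forall y, V y y) by (intro y; destruct (hT y) as [_ T]; exact T).
  assert (Topen : forall y x, V y (p x) -> is_open (E y x) /\ E y x x)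
    by (intro y; destruct (hT y) as [[_ [T _]] _]; exact T).
  assert (Tmaps : forall y x z, V y (p x) -> E y x z -> V y (p z))
    by (intro y; destruct (hT y) as [[_ [_ [T _]]] _]; exact T).
  assert (Tinj : forall y x z w, V y (p x) -> E y x z -> E y x w -> p z = p w -> z = w)
    by (intro y; destruct (hT y) as [[_ [_ [_ [T _]]]] _]; exact T).
  assert (Tonto : forall y x y', V y (p x) -> V y y' -> exists z, E y x z /\ p z = y')
    by (intro y; destruct (hT y) as [[_ [_ [_ [_ [T _]]]]] _]; exact T).
  assert (Tpart : forall y x z, V y (p x) -> E y x z -> forall w, E y z w <-> E y x w)
    by (intro y; destruct (hT y) as [[_ [_ [_ [_ [_ T]]]]] _]; exact T).
  assert (KWV : forall y y', Wset p G y y' -> V y y').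
  { intros y y' Hw. destruct (Hsurj y) as [x0 Hx0]. destruct (Hw x0 Hx0) as [g [Gg <-]].
    destruct (HG x0) as [_ [_ [HGE _]]]. pose proof (HGE g Gg) as Eg. rewrite Hx0 in Eg.
    apply (Tmaps y x0 g); [rewrite Hx0; apply TVy| auto]. }
  assert (KWo : forall y, is_open (Wset p G y)).
  { intro y. destruct (Hfin y) as [l Hl].
    apply open_ext with (fun y' => forall x, In x l -> p x = y -> image p (G x) y').
    - apply open_list_inter. intros; apply Hpo; apply HG.
    - intro y'; split.
      + intros H x Hx; apply H; [apply Hl|]; auto.
      + intros H x _ Hx; apply H; auto. }
  assert (KWself : forall y, Wset p G y y).
  { intros y x Hx; exists x; split; [apply HG| auto]. }
  assert (K0' : forall y x u, Wset p G y (p u) -> p x = y -> E y x u -> G x u).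
  { intros y x u Hw Hx Exu. destruct (Hw x Hx) as [g [Gg Hg]].
    destruct (HG x) as [_ [_ [HGE _]]]. pose proof (HGE g Gg) as Eg. rewrite Hx in Eg.
    assert (g = u) by (apply (Tinj y x); [rewrite Hx; apply TVy| auto..]). subst; auto. }
  assert (K0 : forall y z, Wset p G y (p z) -> exists x, p x = y /\ E y x z).
  { intros y z Hw. assert (Vz := KWV _ _ Hw). destruct (Tonto y z y Vz (TVy y)) as [x [Ezx Hx]].
    exists x; split; auto. apply (Tpart y z x Vz Ezx). apply Topen; auto. }
  assert (Kclx : forall k x, B k x -> cl (B k) x).
  { intros k x Bx O _ Ox. exists x; auto. }
  assert (KL : forall k x, cl (B k) x -> In k (L x)).
  { intros k x Hx. destruct (HN x) as [HNo [HNx HNl]]. apply HNl.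
    destruct (Hx (N x) HNo HNx) as [w [Nw Bw]]. exists w; auto. }
  assert (K1 : forall y k z, Wset p G y (p z) -> cl (B k) z -> exists x, p x = y /\ E y x z /\ cl (B k) x).
  { intros y k z Hw Hclz. destruct (K0 y z Hw) as [x [Hx Exz]]. exists x; split; auto; split; auto.
    assert (Gxz := K0' y x z Hw Hx Exz). destruct (HN x) as [HNo [_ HNl]].
    destruct (HG x) as [HGo [_ [_ [HGN HGk]]]].
    assert (Hk: In k (L x)).
    { apply HNl. destruct (Hclz (N x) HNo (HGN z Gxz)) as [w [Nw Bw]]. exists w; auto. }
    apply NNPP; intro ncl. destruct (HGk k Hk) as [_ Hd]. destruct (Hclz (G x) HGo Gxz) as [w [Gw Bw]].
    apply (Hd ncl w Gw Bw). }
  assert (K2 : forall y xi k z u, Wset p G y (p xi) -> Sig p E G y xi z -> Sig p E G y xi u -> cl (B k) z -> E (c k) z u).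
  { intros y xi k z u Wxi [Ez Wz] [Eu Wu] Hclz. destruct (K1 y k z Wz Hclz) as [x [Hx [Exz Hclx]]].
    assert (Vxi := KWV _ _ Wxi).
    assert (Vx : V y (p x)) by (rewrite Hx; apply TVy).
    assert (Ezu : E y z u) by (apply (Tpart y xi z Vxi Ez); auto).
    assert (Exu : E y x u) by (apply (Tpart y x z Vx Exz); auto).
    assert (Gxu := K0' y x u Wu Hx Exu). assert (Gxz := K0' y x z Wz Hx Exz).
    destruct (HG x) as [_ [_ [_ [_ HGk]]]]. destruct (HGk k (KL k x Hclx)) as [Hin _].
    apply (Tpart (c k) x z (Hcl k x Hclx) (Hin Hclx z Gxz)). apply Hin; auto. }
  assert (Sig_open : forall y xi, Wset p G y (p xi) -> is_open (Sig p E G y xi)).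
  { intros y xi Wxi. apply (open_inter _ (E y xi) (fun z => Wset p G y (p z))).
    - apply Topen; apply KWV; auto.
    - apply Hc; apply KWo. }
  assert (Sig_onto : forall y xi w, Wset p G y (p xi) -> Wset p G y w -> exists z, Sig p E G y xi z /\ p z = w).
  { intros y xi w Wxi Ww. destruct (Tonto y xi w (KWV _ _ Wxi) (KWV _ _ Ww)) as [z [Ez Hz]].
    exists z; split; [split; [auto| rewrite Hz; auto]| auto]. }
  assert (Sig_homeo : forall y xi, Wset p G y (p xi) -> homeo_onto p (Sig p E G y xi) (Wset p G y)).
  { intros y xi Wxi. apply homeo_of; auto.
    - intros x [_ Hx]; auto.
    - intros x x' [Ex _] [Ex' _] Hpx. apply (Tinj y xi); [apply KWV; auto|auto..]. }
  assert (Sig_img : forall y xi, Wset p G y (p xi) -> image p (Sig p E G y xi) = Wset p G y).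
  { intros y xi Wxi. apply set_ext. intro w; split.
    - intros [z [[_ Wz] <-]]; auto.
    - intro Ww. destruct (Sig_onto y xi w Wxi Ww) as [z [Hz1 Hz2]]. exists z; auto. }
  assert (Sig_sheets : forall y, disjoint_sheets p (fun x => Wset p G y (p x)) (Wset p G y)
             {x | p x = y} (fun s => Sig p E G y (proj1_sig s))).
  { intro y. split; [|split; [|split]].
    - intros [x hx]; simpl. apply Sig_open. rewrite hx; apply KWself.
    - intros [x1 h1] [x2 h2] z [Ez1 _] [Ez2 _]; simpl in *.
      assert (V1 : V y (p x1)) by (rewrite h1; apply TVy).
      assert (V2 : V y (p x2)) by (rewrite h2; apply TVy).
      assert (Ezx2 : E y z x2) by (apply (Tpart y x2 z V2 Ez2); apply Topen; auto).
      assert (E12 : E y x1 x2) by (apply (Tpart y x1 z V1 Ez1); auto).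
      assert (x1 = x2) by (apply (Tinj y x1 x1 x2); [auto| apply Topen; auto| auto| congruence]).
      subst x2. f_equal. apply proof_irrelevance.
    - intro z; split.
      + intro Wz. destruct (K0 y z Wz) as [x [Hx Exz]]. exists (exist _ x Hx). simpl. split; auto.
      + intros [s [_ Wz]]; auto.
    - intros [x hx]; simpl. apply Sig_homeo. rewrite hx; apply KWself. }
  assert (star_eq : forall x, star (CC p E G) x = St p E G x).
  { intro x. apply set_ext. intro z; split.
    - intros [U [[y [xi [Wxi ->]]] [[Ex Wx] [Ez Wz]]]]. exists y; split; [auto|]. split; [|auto].
      apply (Tpart y xi x (KWV _ _ Wxi) Ex); auto.
    - intros [y [Wx Sz]]. exists (Sig p E G y x). split; [exists y, x; auto|split; [|auto]].
      split; [apply Topen; apply KWV; auto| auto]. }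
  assert (St_inE : forall x k z, B k x -> St p E G x z -> E (c k) x z).
  { intros x k z Bx [y [Wx Sz]]. apply (K2 y x k x z Wx); auto.
    split; [apply Topen; apply KWV; auto| auto]. }
  assert (St_open : forall x, is_open (St p E G x)).
  { intro x. apply open_union'. intros z [y [Wx Sz]]. exists (Sig p E G y x).
    split; [apply Sig_open; auto| split; [auto|]]. intros w Sw. exists y; auto. }
  assert (St_cov : forall x z, image p (St p E G x) (p z) <-> exists x', p x' = p x /\ St p E G x' z).
  { intros x z; split.
    - intros [u [[y [Wx [Eu Wu]]] Hpu]].
      assert (Wz : Wset p G y (p z)) by (rewrite <- Hpu; auto).
      assert (Vz := KWV _ _ Wz). assert (Vx := KWV _ _ Wx).
      destruct (Tonto y z (p x) Vz Vx) as [x' [Ezx' Hx']]. exists x'; split; auto.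
      exists y. split; [rewrite Hx'; auto|]. split; [|auto].
      apply (Tpart y z x' Vz Ezx'). apply Topen; auto.
    - intros [x' [hx' [y [Wx' [Ez Wz]]]]].
      assert (Wx : Wset p G y (p x)) by (rewrite <- hx'; auto).
      destruct (Sig_onto y x (p z) Wx Wz) as [u [Su Hu]].
      exists u; split; auto. exists y; split; auto. }
  assert (St_homeo : forall x x', p x' = p x -> homeo_onto p (St p E G x') (image p (St p E G x))).
  { intros x x' hx'. apply homeo_of; auto.
    - intros z Hz. apply St_cov. exists x'; auto.
    - intros z z' Hz Hz' Hp. destruct (HBc x') as [k Bk].
      apply (Tinj (c k) x'); [apply Hcl; apply Kclx; auto| apply St_inE; auto.. | auto].
    - intros w [u [[y [Wx Su]] <-]].
      assert (Wx' : Wset p G y (p x')) by (rewrite hx'; auto).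
      destruct Su as [_ Wu].
      destruct (Sig_onto y x' (p u) Wx' Wu) as [z [Sz Hz]]. exists z; split; [exists y; auto| auto]. }
  exists (CC p E G). split; [split; [|split]|].
  - intros U [y [xi [Wxi ->]]]. split; [apply Sig_open; auto|].
    exists {x | p x = y}, (fun s => Sig p E G y (proj1_sig s)).
    destruct (K0 y xi Wxi) as [x0 [Hx0 Ex0]].
    exists (exist _ x0 Hx0). split.
    + rewrite (Sig_img y xi Wxi). apply Sig_sheets.
    + intro z; simpl. unfold Sig.
      assert (Vx0 : V y (p x0)) by (rewrite Hx0; apply TVy).
      pose proof (Tpart y x0 xi Vx0 Ex0 z). tauto.
  - intro x. exists (Sig p E G (p x) x). split; [exists (p x), x; split; [apply KWself| auto]|].
    split; [apply Topen; apply TVy| apply KWself].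
  - intros U [y [xi [Wxi ->]]]. exists {x | p x = y}, (fun s => Sig p E G y (proj1_sig s)). split.
    + intros [x hx]; simpl. exists y, x; split; [rewrite hx; apply KWself| auto].
    + rewrite (Sig_img y xi Wxi). apply Sig_sheets.
  - intro x. rewrite star_eq. split; [apply St_open|].
    exists {x' | p x' = p x}, (fun s => St p E G (proj1_sig s)), (exist (fun x' => p x' = p x) x eq_refl).
    split; [split; [|split; [|split]]|].
    + intros s; apply St_open.
    + intros [x1 h1] [x2 h2] z H1 H2; simpl in *.
      destruct (HBc z) as [k Bz].
      destruct H1 as [y1 [W1 S1]]. destruct H2 as [y2 [W2 S2]].
      assert (E1 : E (c k) z x1).
      { apply (K2 y1 x1 k z x1 W1 S1); [split; [apply Topen; apply KWV; auto|auto]| apply Kclx; auto]. }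
      assert (E2 : E (c k) z x2).
      { apply (K2 y2 x2 k z x2 W2 S2); [split; [apply Topen; apply KWV; auto|auto]| apply Kclx; auto]. }
      assert (x1 = x2).
      { apply (Tinj (c k) z); [apply Hcl; apply Kclx; auto| auto| auto| congruence]. }
      subst x2. f_equal. apply proof_irrelevance.
    + intro z. rewrite St_cov. split.
      * intros [x' [hx' Hs]]. exists (exist _ x' hx'); auto.
      * intros [[x' hx'] Hs]. exists x'; auto.
    + intros [x' hx']; simpl. apply St_homeo; auto.
    + intro z; simpl; tauto.
Qed.

Theorem corollary4p11 (X Y : TopSpace) (p : X -> Y) :
  covering_map p -> finite_fibers p -> hausdorff X -> paracompact X ->
  overlay p.
Proof.
  intros Hcov Hfin Hh Hpc.
  pose proof Hcov as [Hc [Hsurj _]].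
  pose proof (cov_open_image p Hcov) as Hpo.
  destruct (cov_triv p Hcov) as [V [E hT]].
  destruct (refine_cl p V Hc Hpc Hh) as [K [B [c [HBo [HBc [Hcl Hlf]]]]]].
  { intro y; destruct (hT y) as [[T _] Vy]; auto. }
  assert (HNL : forall x, exists NL : (X -> Prop) * list K, is_open (fst NL) /\ fst NL x /\
              forall k, (exists z, fst NL z /\ B k z) -> In k (snd NL)).
  { intro x. destruct (Hlf x) as [W [HW [Wx [l Hl]]]]. exists (W, l); simpl; auto. }
  destruct (choice' _ HNL) as [f Hf].
  pose (N := fun x => fst (f x)). pose (L := fun x => snd (f x)).
  assert (HG : forall x, exists Gx : X -> Prop, is_open Gx /\ Gx x /\ (forall z, Gx z -> E (p x) x z) /\
      (forall z, Gx z -> N x z) /\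
      forall k, In k (L x) -> (cl (B k) x -> forall z, Gx z -> E (c k) x z) /\ (~ cl (B k) x -> forall z, Gx z -> ~ B k z)).
  { intro x.
    destruct (nbhd_list x (L x) (fun k O => (cl (B k) x -> forall z, O z -> E (c k) x z) /\
                                    (~ cl (B k) x -> forall z, O z -> ~ B k z))) as [O [HO [Ox HOl]]].
    - intros k O O' Hs [H1 H2]. split; intros h z Oz; [apply H1|apply H2]; auto.
    - intros k _. destruct (classic (cl (B k) x)) as [Hk|Hk].
      + destruct (hT (c k)) as [[_ [T _]] _]. destruct (T x (Hcl k x Hk)) as [Te Tx].
        exists (E (c k) x). split; [auto|split; [auto|split; [auto|intro; contradiction]]].
      + destruct (classic (exists O, is_open O /\ O x /\ forall w, O w -> ~ B k w)) as [[O [HO [Ox HOw]]]|H].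
        * exists O. split; [auto|split; [auto|split; [intro; contradiction| auto]]].
        * exfalso. apply Hk. intros O HO Ox. apply NNPP; intro Hn. apply H. exists O.
          split; [auto|split; [auto|]]. intros w Ow Bw. apply Hn; exists w; auto.
    - destruct (hT (p x)) as [[_ [T _]] Vy]. destruct (T x Vy) as [Te Tx].
      destruct (Hf x) as [HN1 [HN2 _]].
      exists (fun z => O z /\ E (p x) x z /\ N x z). split; [|split; [auto|split; [|split]]].
      + apply (open_inter _ O). auto. apply (open_inter _ (E (p x) x) (N x)); auto.
      + intros z [_ [Hz _]]; auto.
      + intros z [_ [_ Hz]]; auto.
      + intros k Hk. destruct (HOl k Hk) as [H1 H2]. split; intros h z [Oz _]; [apply H1|apply H2]; auto. }
  destruct (choice' _ HG) as [Gf HGf].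
  apply (core p V E K B c N L Gf); auto.
Qed.
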